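(* On the domain $B>0$, $\mathrm{FOV}\in(0,\pi/2]$, both $L_{\mathrm{ADR}}(B,\mathrm{FOV})$ and $A_{\mathrm{ADR}}(B,\mathrm{FOV})$ are strictly decreasing in $B$ (for fixed $\mathrm{FOV}$) and strictly decreasing in $\mathrm{FOV}$ (for fixed $B$).
   Context: Fix constants: an integer $N_{\mathrm{tier}}\ge1$; an integer $N_{\mathrm{PD}}\ge 1$; $\mathrm{FF}\in(0,1]$; $K_{\mathrm{PD}}>0$; $n_{\mathrm{CPC}}\ge 1$. The design variables are $B>0$ and $\mathrm{FOV}\in(0,\pi/2]$. Write $\theta=\theta_{\mathrm{CPC}}=\mathrm{FOV}/(2N_{\mathrm{tier}}+1)$. Set $K_1=\frac{1}{2K_{\mathrm{PD}}}\sqrt{N_{\mathrm{PD}}/\mathrm{FF}}$ and $K_2=\frac{\pi N_{\mathrm{PD}}n_{\mathrm{CPC}}^2}{4\,\mathrm{FF}\,K_{\mathrm{PD}}^2}$, and define the receiver height and top area $L_{\mathrm{ADR}}(B,\mathrm{FOV})=\frac{K_1}{B}\cdot\frac{n_{\mathrm{CPC}}+\sin\theta}{\sin\theta\,\tan\theta}$, $A_{\mathrm{ADR}}(B,\mathrm{FOV})=\frac{K_2}{B^2\sin^2\theta}\Big(1+\sum_{i=1}^{N_{\mathrm{tier}}}6i\cos(2i\theta)\Big)$. *)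

(* Defs.v *)
From Stdlib Require Import Reals Lra Lia.
Open Scope R_scope.

Definition theta_CPC (Ntier : nat) (FOV : R) : R := FOV / (2 * INR Ntier + 1).

Definition K1 (NPD : nat) (FF KPD : R) : R := / (2 * KPD) * sqrt (INR NPD / FF).

Definition K2 (NPD : nat) (FF KPD nCPC : R) : R :=
  PI * INR NPD * nCPC ^ 2 / (4 * FF * KPD ^ 2).

Definition L_ADR (Ntier NPD : nat) (FF KPD nCPC B FOV : R) : R :=
  let th := theta_CPC Ntier FOV in
  K1 NPD FF KPD / B * ((nCPC + sin th) / (sin th * tan th)).

(* sum_{i=1}^{Ntier} 6 i cos(2 i th), written as sum_{k=0}^{Ntier-1} with i = k+1 *)
Definition tier_sum (Ntier : nat) (th : R) : R :=
  sum_f_R0 (fun k => 6 * INR (S k) * cos (2 * INR (S k) * th)) (Ntier - 1).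

Definition A_ADR (Ntier NPD : nat) (FF KPD nCPC B FOV : R) : R :=
  let th := theta_CPC Ntier FOV in
  K2 NPD FF KPD nCPC / (B ^ 2 * sin th ^ 2) * (1 + tier_sum Ntier th).

(* Main.v *)
Require Import Defs.
From Stdlib Require Import Reals Lra Lia Psatz.
Open Scope R_scope.

Lemma D_pos N : 0 < 2 * INR N + 1.
Proof. pose proof (pos_INR N); lra. Qed.

Lemma ang_bound N k FOV : (1 <= N)%nat -> (S k <= N)%nat -> 0 < FOV -> FOV <= PI/2 ->
  0 < 2 * INR (S k) * theta_CPC N FOV < PI / 2.
Proof.
  intros HN Hk H0 H1. unfold theta_CPC.
  pose proof (D_pos N) as HD. pose proof PI_RGT_0.
  assert (Hk' : INR (S k) <= INR N) by (apply le_INR; lia).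
  assert (Hk0 : 1 <= INR (S k)) by (replace 1 with (INR 1) by reflexivity; apply le_INR; lia).
  split.
  - apply Rmult_lt_0_compat; [lra|]. apply Rdiv_lt_0_compat; lra.
  - apply (Rmult_lt_reg_r (2 * INR N + 1)); [lra|].
    replace (2 * INR (S k) * (FOV / (2 * INR N + 1)) * (2 * INR N + 1))
      with (2 * INR (S k) * FOV) by (field; lra).
    nra.
Qed.

Lemma th_bound N FOV : (1 <= N)%nat -> 0 < FOV -> FOV <= PI/2 ->
  0 < theta_CPC N FOV < PI / 2.
Proof.
  intros HN H0 H1.
  pose proof (ang_bound N 0 FOV HN ltac:(lia) H0 H1) as [A B].
  simpl INR in *. lra.
Qed.

Lemma th_lt N F1 F2 : F1 < F2 -> theta_CPC N F1 < theta_CPC N F2.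
Proof.
  intros H. unfold theta_CPC. pose proof (D_pos N).
  apply Rmult_lt_compat_r; [apply Rinv_0_lt_compat; lra | lra].
Qed.

Lemma tier_nonneg N FOV : (1 <= N)%nat -> 0 < FOV -> FOV <= PI/2 ->
  0 <= tier_sum N (theta_CPC N FOV).
Proof.
  intros HN H0 H1. unfold tier_sum.
  replace 0 with (sum_f_R0 (fun _ => 0) (N - 1)).
  2:{ rewrite sum_cte. ring. }
  apply sum_Rle. intros k Hk.
  pose proof (ang_bound N k FOV HN ltac:(lia) H0 H1) as [A B].
  assert (0 < cos (2 * INR (S k) * theta_CPC N FOV)) by (apply cos_gt_0; lra).
  pose proof (pos_INR (S k)). nra.
Qed.

Lemma tier_mono N F1 F2 : (1 <= N)%nat -> 0 < F1 -> F1 < F2 -> F2 <= PI/2 ->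
  tier_sum N (theta_CPC N F2) <= tier_sum N (theta_CPC N F1).
Proof.
  intros HN H0 H1 H2. unfold tier_sum.
  apply sum_Rle. intros k Hk.
  pose proof (ang_bound N k F1 HN ltac:(lia) H0 ltac:(lra)) as [A B].
  pose proof (ang_bound N k F2 HN ltac:(lia) ltac:(lra) H2) as [C D].
  pose proof (th_lt N F1 F2 H1).
  assert (0 < INR (S k)) by (apply lt_0_INR; lia).
  assert (cos (2 * INR (S k) * theta_CPC N F2) < cos (2 * INR (S k) * theta_CPC N F1)).
  { apply cos_decreasing_1; try lra. nra. }
  nra.
Qed.

Lemma K1_pos NPD FF KPD : (1 <= NPD)%nat -> 0 < FF -> 0 < KPD -> 0 < K1 NPD FF KPD.
Proof.
  intros. unfold K1. apply Rmult_lt_0_compat.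
  - apply Rinv_0_lt_compat; lra.
  - apply sqrt_lt_R0. apply Rdiv_lt_0_compat; [apply lt_0_INR; lia | lra].
Qed.

Lemma K2_pos NPD FF KPD nCPC : (1 <= NPD)%nat -> 0 < FF -> 0 < KPD -> 1 <= nCPC ->
  0 < K2 NPD FF KPD nCPC.
Proof.
  intros. unfold K2. pose proof PI_RGT_0. assert (0 < INR NPD) by (apply lt_0_INR; lia).
  apply Rdiv_lt_0_compat.
  - apply Rmult_lt_0_compat; [|nra]. nra.
  - apply Rmult_lt_0_compat; [lra|]. nra.
Qed.

Lemma fL_eq n th : 0 < th < PI/2 ->
  (n + sin th) / (sin th * tan th) = cos th * ((n + sin th) / (sin th * sin th)).
Proof.
  intros H. pose proof PI_RGT_0.
  assert (0 < sin th) by (apply sin_gt_0; lra).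
  assert (0 < cos th) by (apply cos_gt_0; lra).
  unfold tan. field. lra.
Qed.

Lemma fL_pos n th : 1 <= n -> 0 < th < PI/2 -> 0 < (n + sin th) / (sin th * tan th).
Proof.
  intros Hn H. rewrite fL_eq by lra. pose proof PI_RGT_0.
  assert (0 < sin th) by (apply sin_gt_0; lra).
  assert (0 < cos th) by (apply cos_gt_0; lra).
  apply Rmult_lt_0_compat; [lra|]. apply Rdiv_lt_0_compat; nra.
Qed.

Lemma fL_lt n t1 t2 : 1 <= n -> 0 < t1 -> t1 < t2 -> t2 < PI/2 ->
  (n + sin t2) / (sin t2 * tan t2) < (n + sin t1) / (sin t1 * tan t1).
Proof.
  intros Hn H0 H1 H2. pose proof PI_RGT_0.
  rewrite !fL_eq by lra.
  assert (s1 : 0 < sin t1) by (apply sin_gt_0; lra).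
  assert (c2 : 0 < cos t2) by (apply cos_gt_0; lra).
  assert (s12 : sin t1 < sin t2) by (apply sin_increasing_1; lra).
  assert (c12 : cos t2 < cos t1) by (apply cos_decreasing_1; lra).
  assert (Q : (n + sin t2) / (sin t2 * sin t2) < (n + sin t1) / (sin t1 * sin t1)).
  { assert (Hp : 0 < sin t1 * sin t1 * (sin t2 * sin t2)).
    { apply Rmult_lt_0_compat; apply Rmult_lt_0_compat; lra. }
    apply (Rmult_lt_reg_r (sin t1 * sin t1 * (sin t2 * sin t2)) _ _ Hp).
    replace ((n + sin t2) / (sin t2 * sin t2) * (sin t1 * sin t1 * (sin t2 * sin t2)))
      with ((n + sin t2) * (sin t1 * sin t1)) by (field; lra).
    replace ((n + sin t1) / (sin t1 * sin t1) * (sin t1 * sin t1 * (sin t2 * sin t2)))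
      with ((n + sin t1) * (sin t2 * sin t2)) by (field; lra).
    assert (A1 : sin t1 * sin t1 < sin t2 * sin t2) by nra.
    assert (A2 : n * (sin t1 * sin t1) < n * (sin t2 * sin t2)) by (apply Rmult_lt_compat_l; lra).
    assert (A3 : sin t2 * (sin t1 * sin t1) < sin t1 * (sin t2 * sin t2)).
    { replace (sin t2 * (sin t1 * sin t1)) with ((sin t1 * sin t2) * sin t1) by ring.
      replace (sin t1 * (sin t2 * sin t2)) with ((sin t1 * sin t2) * sin t2) by ring.
      apply Rmult_lt_compat_l; nra. }
    lra. }
  assert (0 < (n + sin t2) / (sin t2 * sin t2)) by (apply Rdiv_lt_0_compat; nra).
  nra.
Qed.

Theorem proposition2 (Ntier NPD : nat) (FF KPD nCPC : R)
  (hNtier : (1 <= Ntier)%nat) (hNPD : (1 <= NPD)%nat)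
  (hFF0 : 0 < FF) (hFF1 : FF <= 1) (hKPD : 0 < KPD) (hn : 1 <= nCPC) :
  (* strictly decreasing in B, for each fixed FOV in (0, pi/2] *)
  (forall FOV B1 B2, 0 < FOV -> FOV <= PI / 2 -> 0 < B1 -> B1 < B2 ->
     L_ADR Ntier NPD FF KPD nCPC B2 FOV < L_ADR Ntier NPD FF KPD nCPC B1 FOV /\
     A_ADR Ntier NPD FF KPD nCPC B2 FOV < A_ADR Ntier NPD FF KPD nCPC B1 FOV) /\
  (* strictly decreasing in FOV on (0, pi/2], for each fixed B > 0 *)
  (forall B F1 F2, 0 < B -> 0 < F1 -> F1 < F2 -> F2 <= PI / 2 ->
     L_ADR Ntier NPD FF KPD nCPC B F2 < L_ADR Ntier NPD FF KPD nCPC B F1 /\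
     A_ADR Ntier NPD FF KPD nCPC B F2 < A_ADR Ntier NPD FF KPD nCPC B F1).
Proof.
  pose proof (K1_pos NPD FF KPD hNPD hFF0 hKPD) as HK1.
  pose proof (K2_pos NPD FF KPD nCPC hNPD hFF0 hKPD hn) as HK2.
  pose proof PI_RGT_0 as HPI.
  split.
  - intros FOV B1 B2 H0 H1 HB1 HB2.
    pose proof (th_bound Ntier FOV hNtier H0 H1) as Hth.
    pose proof (tier_nonneg Ntier FOV hNtier H0 H1) as HT.
    unfold L_ADR, A_ADR. set (th := theta_CPC Ntier FOV) in *.
    pose proof (fL_pos nCPC th hn Hth) as Hf.
    assert (s : 0 < sin th) by (apply sin_gt_0; lra).
    set (f := (nCPC + sin th) / (sin th * tan th)) in *.
    set (T := tier_sum Ntier th) in *.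
    split.
    + apply Rmult_lt_compat_r; [exact Hf|].
      unfold Rdiv. apply Rmult_lt_compat_l; [exact HK1|].
      apply Rinv_lt_contravar; nra.
    + apply Rmult_lt_compat_r; [lra|].
      unfold Rdiv. apply Rmult_lt_compat_l; [exact HK2|].
      assert (0 < sin th ^ 2) by nra.
      apply Rinv_lt_contravar.
      * apply Rmult_lt_0_compat; apply Rmult_lt_0_compat; nra.
      * apply Rmult_lt_compat_r; [lra|]. nra.
  - intros B F1 F2 HB H0 H1 H2.
    pose proof (th_bound Ntier F1 hNtier H0 ltac:(lra)) as Ht1.
    pose proof (th_bound Ntier F2 hNtier ltac:(lra) H2) as Ht2.
    pose proof (th_lt Ntier F1 F2 H1) as Hlt.
    pose proof (tier_nonneg Ntier F2 hNtier ltac:(lra) H2) as HT.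
    pose proof (tier_mono Ntier F1 F2 hNtier H0 H1 H2) as HTm.
    unfold L_ADR, A_ADR.
    set (t1 := theta_CPC Ntier F1) in *. set (t2 := theta_CPC Ntier F2) in *.
    assert (s1 : 0 < sin t1) by (apply sin_gt_0; lra).
    assert (s12 : sin t1 < sin t2) by (apply sin_increasing_1; lra).
    split.
    + apply Rmult_lt_compat_l; [apply Rdiv_lt_0_compat; lra|].
      apply fL_lt; lra.
    + set (T1 := tier_sum Ntier t1) in *. set (T2 := tier_sum Ntier t2) in *.
      assert (Hk : K2 NPD FF KPD nCPC / (B ^ 2 * sin t2 ^ 2) < K2 NPD FF KPD nCPC / (B ^ 2 * sin t1 ^ 2)).
      { unfold Rdiv. apply Rmult_lt_compat_l; [exact HK2|].
        apply Rinv_lt_contravar.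
        * apply Rmult_lt_0_compat; apply Rmult_lt_0_compat; nra.
        * assert (0 < B ^ 2) by nra. apply Rmult_lt_compat_l; [lra|]. nra. }
      assert (0 < K2 NPD FF KPD nCPC / (B ^ 2 * sin t2 ^ 2)).
      { apply Rdiv_lt_0_compat; [exact HK2|]. apply Rmult_lt_0_compat; nra. }
      nra.
Qed.
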